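(* Let $(X,\tau)$ be a $\mathbb{B}$-topological space. (i) If $(X,\tau)$ is $T_1$, then the topological space $(X,\tau[tt]\vee\tau[ff])$ is $T_1$. (ii) If both topological spaces $(X,\tau[tt])$ and $(X,\tau[ff])$ are $T_1$, then $(X,\tau)$ is $T_1$.
   Context: $\mathbb{B}=\{0,1,tt,ff\}$ is the four-element Boolean algebra with bottom $0$, top $1$, and $tt,ff$ incomparable complements; $a\to b=\neg a\vee b$. A $\mathbb{B}$-topology on $X$ is $\tau\subseteq\mathbb{B}^X$ containing all constant maps and closed under arbitrary pointwise joins and finite pointwise meets; $\tau[b]=\{\lambda[b]:\lambda\in\tau\}$ with $\lambda[b]=\{x:\lambda(x)\ge b\}$; $\tau[tt]\vee\tau[ff]$ is the topology generated by $\tau[tt]\cup\tau[ff]$. Specialization $\mathbb{B}$-order: $\Omega(\tau)(x,y)=\bigwedge_{\lambda\in\tau}(\lambda(x)\to\lambda(y))$. $(X,\tau)$ is $R_0$ if $\Omega(\tau)$ is symmetric, $T_0$ if $\Omega(\tau)(x,y)=1=\Omega(\tau)(y,x)$ implies $x=y$, and $T_1$ if it is both $T_0$ and $R_0$. *)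

(* Defs.v *)
From Stdlib Require Import Classical ClassicalEpsilon.

Inductive B4 : Type := B0 | B1 | Btt | Bff.

Definition ble (a b : B4) : bool :=
  match a, b with
  | B0, _ => true
  | _, B1 => true
  | Btt, Btt => true
  | Bff, Bff => true
  | _, _ => false
  end.

Definition bmeet (a b : B4) : B4 :=
  match a, b with
  | B1, c => c
  | c, B1 => c
  | Btt, Btt => Btt
  | Bff, Bff => Bff
  | _, _ => B0
  end.

Definition bjoin (a b : B4) : B4 :=
  match a, b with
  | B0, c => c
  | c, B0 => c
  | Btt, Btt => Btt
  | Bff, Bff => Bff
  | _, _ => B1
  end.

Definition bneg (a : B4) : B4 :=
  match a with B0 => B1 | B1 => B0 | Btt => Bff | Bff => Btt end.

Definition bimp (a b : B4) : B4 := bjoin (bneg a) b.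

(* Arbitrary meets/joins of a subset S of the (finite) lattice B. *)
Definition bmeetS (S : B4 -> Prop) : B4 :=
  let f b := if excluded_middle_informative (S b) then b else B1 in
  bmeet (f B0) (bmeet (f B1) (bmeet (f Btt) (f Bff))).

Definition bjoinS (S : B4 -> Prop) : B4 :=
  let f b := if excluded_middle_informative (S b) then b else B0 in
  bjoin (f B0) (bjoin (f B1) (bjoin (f Btt) (f Bff))).

Definition is_Btopology {X : Type} (tau : (X -> B4) -> Prop) : Prop :=
  (forall c : B4, tau (fun _ => c)) /\
  (forall F : (X -> B4) -> Prop, (forall l, F l -> tau l) ->
     tau (fun x => bjoinS (fun b => exists l, F l /\ b = l x))) /\
  (forall l m, tau l -> tau m -> tau (fun x => bmeet (l x) (m x))).

Definition Omega {X : Type} (tau : (X -> B4) -> Prop) (x y : X) : B4 :=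
  bmeetS (fun b => exists l, tau l /\ b = bimp (l x) (l y)).

Definition BR0 {X : Type} (tau : (X -> B4) -> Prop) : Prop :=
  forall x y, Omega tau x y = Omega tau y x.

Definition BT0 {X : Type} (tau : (X -> B4) -> Prop) : Prop :=
  forall x y, Omega tau x y = B1 -> Omega tau y x = B1 -> x = y.

Definition BT1 {X : Type} (tau : (X -> B4) -> Prop) : Prop :=
  BT0 tau /\ BR0 tau.

(* lambda[b] = {x | lambda x >= b} ; tau[b] = {lambda[b] | lambda in tau} *)
Definition cut {X : Type} (l : X -> B4) (b : B4) : X -> Prop :=
  fun x => ble b (l x) = true.

Definition cutTop {X : Type} (tau : (X -> B4) -> Prop) (b : B4) : (X -> Prop) -> Prop :=
  fun U => exists l, tau l /\ U = cut l b.

Definition is_topology {X : Type} (T : (X -> Prop) -> Prop) : Prop :=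
  T (fun _ => True) /\
  (forall F : (X -> Prop) -> Prop, (forall V, F V -> T V) ->
     T (fun x => exists V, F V /\ V x)) /\
  (forall U V, T U -> T V -> T (fun x => U x /\ V x)).

Definition gen_top {X : Type} (S : (X -> Prop) -> Prop) : (X -> Prop) -> Prop :=
  fun U => forall T, is_topology T -> (forall V, S V -> T V) -> T U.

Definition join_top {X : Type} (T1 T2 : (X -> Prop) -> Prop) : (X -> Prop) -> Prop :=
  gen_top (fun U => T1 U \/ T2 U).

Definition T1space {X : Type} (T : (X -> Prop) -> Prop) : Prop :=
  forall x y : X, x <> y -> exists U, T U /\ U x /\ ~ U y.

(* Main.v *)
Require Import Defs.
From Stdlib Require Import Classical ClassicalEpsilon.

Lemma meetS_c (c : B4) (Hc : c = Btt \/ c = Bff) S :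
  ble c (bmeetS S) = true <-> (forall b, S b -> ble c b = true).
Proof.
  unfold bmeetS.
  destruct (excluded_middle_informative (S B0));
  destruct (excluded_middle_informative (S B1));
  destruct (excluded_middle_informative (S Btt));
  destruct (excluded_middle_informative (S Bff));
  destruct Hc; subst; simpl; split; intros H;
  try (intros b Hb; destruct b; simpl; try reflexivity; try contradiction;
       try discriminate H);
  try reflexivity; try discriminate;
  try (exfalso; discriminate (H _ s)); try discriminate (H _ s0);
  try discriminate (H _ s1); try discriminate (H _ s2).
Qed.

Lemma imp_c (c : B4) (Hc : c = Btt \/ c = Bff) a b :
  ble c (bimp a b) = true <-> (ble c a = true -> ble c b = true).
Proof.
  destruct Hc; subst; destruct a, b; simpl; intuition discriminate.
Qed.

Lemma Omega_c {X} (tau : (X -> B4) -> Prop) c (Hc : c = Btt \/ c = Bff) x y :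
  ble c (Omega tau x y) = true <->
  (forall l, tau l -> ble c (l x) = true -> ble c (l y) = true).
Proof.
  unfold Omega. rewrite (meetS_c c Hc). split.
  - intros H l Hl. apply (imp_c c Hc). apply H. exists l; auto.
  - intros H b [l [Hl ->]]. apply (imp_c c Hc). auto.
Qed.

Lemma eq_c a b : ble Btt a = ble Btt b -> ble Bff a = ble Bff b -> a = b.
Proof. destruct a, b; simpl; congruence. Qed.

Lemma one_c a : ble Btt a = true -> ble Bff a = true -> a = B1.
Proof. destruct a; simpl; congruence. Qed.

Lemma c_one c : ble c B1 = true.
Proof. destruct c; reflexivity. Qed.

Lemma sep {X} (tau : (X -> B4) -> Prop) c (Hc : c = Btt \/ c = Bff) x y :
  ble c (Omega tau x y) = false ->
  exists l, tau l /\ ble c (l x) = true /\ ble c (l y) = false.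
Proof.
  intros H. apply NNPP. intro N.
  assert (ble c (Omega tau x y) = true); [|congruence].
  apply (Omega_c tau c Hc). intros l Hl Hx.
  destruct (ble c (l y)) eqn:E; auto. exfalso; apply N; eauto.
Qed.

Lemma T1_false {X} (tau : (X -> B4) -> Prop) c (Hc : c = Btt \/ c = Bff) x y :
  T1space (cutTop tau c) -> x <> y -> ble c (Omega tau x y) = false.
Proof.
  intros HT Hxy. destruct (HT x y Hxy) as [U [[l [Hl ->]] [Ux Uy]]].
  unfold cut in *.
  destruct (ble c (Omega tau x y)) eqn:E; auto.
  exfalso. apply Uy. eapply (proj1 (Omega_c tau c Hc x y)); eauto.
Qed.

Theorem mainTheorem14 (X : Type) (tau : (X -> B4) -> Prop) (Htau : is_Btopology tau) :
  (BT1 tau -> T1space (join_top (cutTop tau Btt) (cutTop tau Bff))) /\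
  (T1space (cutTop tau Btt) -> T1space (cutTop tau Bff) -> BT1 tau).
Proof.
  split.
  - intros [HT0 HR0] x y Hxy.
    assert (Hne : Omega tau x y <> B1).
    { intro E. apply Hxy, HT0; auto. rewrite <- HR0; auto. }
    destruct (ble Btt (Omega tau x y)) eqn:Et.
    + destruct (ble Bff (Omega tau x y)) eqn:Ef.
      * exfalso; apply Hne, one_c; auto.
      * destruct (sep tau Bff (or_intror eq_refl) x y Ef) as [l [Hl [H1 H2]]].
        exists (cut l Bff). split.
        { intros T _ HS. apply HS. right. exists l; auto. }
        unfold cut; split; congruence.
    + destruct (sep tau Btt (or_introl eq_refl) x y Et) as [l [Hl [H1 H2]]].
      exists (cut l Btt). split.
      { intros T _ HS. apply HS. left. exists l; auto. }
      unfold cut; split; congruence.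
  - intros H1 H2. split.
    + intros x y E _. apply NNPP. intro Hxy.
      pose proof (T1_false tau Btt (or_introl eq_refl) x y H1 Hxy) as F.
      rewrite E in F. discriminate.
    + intros x y. destruct (classic (x = y)) as [->|Hxy]; auto.
      apply eq_c.
      * rewrite (T1_false tau Btt (or_introl eq_refl) x y H1 Hxy).
        rewrite (T1_false tau Btt (or_introl eq_refl) y x H1 (fun e => Hxy (eq_sym e))). auto.
      * rewrite (T1_false tau Bff (or_intror eq_refl) x y H2 Hxy).
        rewrite (T1_false tau Bff (or_intror eq_refl) y x H2 (fun e => Hxy (eq_sym e))). auto.
Qed.
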